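(* Let $q\ge2$, $m\ge0$. If $m\ge1$, fix a partition of $\mathbb{Z}_q^m$ into $q$ distance-$2$ MDS codes $M^1,\dots,M^q$ of $H(m,q)$. For $0\le t\le q$ and $1\le i\le q$, let $G^i_t$ be the map $\mathbb{Z}_q^m\to\{1,2\}$ equal to $1$ exactly on $\bigcup_{j=i}^{i+t-1}M^j$ (indices taken cyclically in $\{1,\dots,q\}$) if $m\ge1$; if $m=0$ ($H(0,q)$ is a single vertex), $G^i_t$ gives that vertex color $1$ if $1\le i\le t$ and color $2$ if $t<i\le q$. Let $\mathbf{l}$ denote the constant map $\mathbb{Z}_q^m\to\{l\}$. (1) Let $f$ be a perfect $(q+1)$-coloring of $H(n,q)$ with quotient matrix whose entries are: $s_{i,i}=\alpha'$ and $s_{i,j}=\alpha$ for $1\le i\ne j\le q$; $s_{i,q+1}=\beta$ for $i\le q$; $s_{q+1,j}=\gamma$ for $j\le q$; $s_{q+1,q+1}=\delta$. If $m=\gamma-\alpha\ge0$, then for every $t\in\{0,\dots,q\}$ and $l\in\{1,2\}$ with $t(l-1)+(q-t)(2-l)\ne0$, the invasion $h_l=f\times(G^1_t,\dots,G^q_t,\mathbf{l})$ is a $(b_l,c_l)$-coloring of $H(n+m,q)$ with $b_l=\gamma(q-t)+\beta(l-1)$ and $c_l=\gamma t+\beta(2-l)$. (2) Let $f$ be a perfect $2q$-coloring of $H(n,q)$ with quotient matrix $(s_{i,j})$ where $s_{i,j}=\alpha$ for $i,j\le q$; $s_{i,j}=\beta$ for $i\le q<j$; $s_{i,j}=\gamma$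 for $j\le q<i$; $s_{i,j}=\delta$ for $i,j>q$. If $m=\gamma-\alpha=\beta-\delta\ge0$, then for all $t_1,t_2\in\{0,\dots,q\}$ with $t_1+t_2\notin\{0,2q\}$ the invasion $h=f\times(G^1_{t_1},\dots,G^q_{t_1},G^1_{t_2},\dots,G^q_{t_2})$ is a $(b,c)$-coloring of $H(n+m,q)$ with $b=q(\gamma+\beta)-\gamma t_1-\beta t_2$ and $c=\gamma t_1+\beta t_2$.
   Context: The Hamming graph $H(n,q)$ has vertex set $\mathbb{Z}_q^n$, two vertices adjacent iff they differ in exactly one coordinate. A perfect $k$-coloring is a surjective map from the vertex set onto $\{1,\dots,k\}$ such that every vertex of color $i$ has exactly $s_{i,j}$ neighbours of color $j$; $(s_{i,j})$ is its quotient matrix. A $(b,c)$-coloring of $H(N,q)$ is a perfect $2$-coloring in which each color-1 vertex has exactly $b$ neighbours of color 2 and each color-2 vertex has exactly $c$ neighbours of color 1. A distance-$2$ MDS code in $H(m,q)$ is a set of $q^{m-1}$ vertices with pairwise Hamming distance at least $2$. Given a $k$-coloring $f$ of $H(n,q)$ and maps $g_1,\dots,g_k:\mathbb{Z}_q^m\to\{1,2\}$, the invasion $f\times(g_1,\dots,g_k)$ is the map on $\mathbb{Z}_q^{n+m}$ given by $(x,y)\mapsto g_{f(x)}(y)$ for $x\in\mathbb{Z}_q^n$, $y\in\mathbb{Z}_q^m$. *)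

(* Defs.v *)
From mathcomp Require Import all_boot.
Set Implicit Arguments. Unset Strict Implicit. Unset Printing Implicit Defensive.

Definition hv (n q : nat) := {ffun 'I_n -> 'I_q}.

Definition hamming (n q : nat) (x y : hv n q) : nat := #|[set i | x i != y i]|.

Definition adj (n q : nat) (x y : hv n q) : bool := hamming x y == 1.

Definition perfect_coloring (n q : nat) (f : hv n q -> nat) (k : nat)
  (S : nat -> nat -> nat) : Prop :=
  [/\ (forall x, 1 <= f x <= k),
      (forall j, 1 <= j <= k -> exists x, f x = j) &
      (forall x j, 1 <= j <= k ->
         #|[set y | adj x y & f y == j]| = S (f x) j)].

Definition bc_coloring (n q : nat) (h : hv n q -> nat) (b c : nat) : Prop :=
  exists S, [/\ perfect_coloring h 2 S, S 1 2 = b & S 2 1 = c].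

Definition mds2 (m q : nat) (C : {set hv m q}) : Prop :=
  #|C| = q ^ (m - 1) /\
  (forall x y, x \in C -> y \in C -> x != y -> 2 <= hamming x y).

Definition mds_partition (m q : nat) (M : nat -> {set hv m q}) : Prop :=
  [/\ (forall j, 1 <= j <= q -> mds2 (M j)),
      (forall i j, 1 <= i <= q -> 1 <= j <= q -> i != j ->
         [disjoint M i & M j]) &
      (forall y, exists2 j, 1 <= j <= q & y \in M j)].

Definition Gmap (m q : nat) (M : nat -> {set hv m q}) (t i : nat)
  (y : hv m q) : nat :=
  if m == 0 then (if (1 <= i) && (i <= t) then 1 else 2)
  else if [exists k : 'I_t, y \in M (((i - 1 + k) %% q).+1)] then 1 else 2.

Definition lpart (n m q : nat) (z : hv (n + m) q) : hv n q :=
  [ffun i : 'I_n => z (lshift m i)].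
Definition rpart (n m q : nat) (z : hv (n + m) q) : hv m q :=
  [ffun j : 'I_m => z (rshift n j)].

Definition invasion (n m q : nat) (f : hv n q -> nat)
  (g : nat -> hv m q -> nat) (z : hv (n + m) q) : nat :=
  g (f (lpart z)) (rpart z).

(* Main.v *)
Require Import Defs.
From mathcomp Require Import all_boot zify.
Set Implicit Arguments. Unset Strict Implicit. Unset Printing Implicit Defensive.

Section Ham.
Variables (N q : nat).
Implicit Types x y : hv N q.

Lemma hamming0 x y : (hamming x y == 0) = (x == y).
Proof.
rewrite /hamming cards_eq0; apply/eqP/eqP => [H|->]; last first.
  by apply/setP=> i; rewrite !inE eqxx.
apply/ffunP => i; apply/eqP; have := congr1 (fun A : {set 'I_N} => i \in A) H.
by rewrite !inE => /negbFE.
Qed.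

Lemma adj_irr x : adj x x = false.
Proof. by rewrite /adj; have := hamming0 x x; rewrite eqxx => /eqP ->. Qed.

Lemma adjP x y : adj x y -> exists k, x k != y k /\ forall k', k' != k -> x k' = y k'.
Proof.
move/cards1P => [k Hk].
have: k \in [set i | x i != y i] by rewrite Hk set11.
rewrite inE => Hk'; exists k; split=>// k' Hne.
apply/eqP; apply: contraNT Hne => H.
have: k' \in [set i | x i != y i] by rewrite inE.
by rewrite Hk inE.
Qed.

Lemma adj_agree x y k : (forall k', k' != k -> x k' = y k') -> x k != y k -> adj x y.
Proof.
move=> Hag Hk; rewrite /adj /hamming; apply/cards1P; exists k; apply/setP => k'.
rewrite !inE; case: (eqVneq k' k) => [->|ne]; first by rewrite Hk.
by rewrite Hag ?eqxx.
Qed.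

Definition upd x (k : 'I_N) (a : 'I_q) : hv N q := [ffun k' => if k' == k then a else x k'].

Lemma degree x : #|[set y | adj x y]| = N * (q - 1).
Proof.
pose D := [set p : 'I_N * 'I_q | p.2 != x p.1].
have -> : [set y | adj x y] = [set upd x p.1 p.2 | p in D].
  apply/setP => y; rewrite inE; apply/idP/imsetP.
    move/adjP => [k [Hk Hag]]; exists (k, y k); first by rewrite inE eq_sym.
    apply/ffunP => k'; rewrite ffunE /=; case: eqVneq => [->//|ne].
    by rewrite Hag.
  move=> [[k a] Hp ->]; rewrite inE /= in Hp.
  apply: (adj_agree (k:=k)) => [k' ne|]; by rewrite ffunE ?(negbTE ne) ?eqxx // eq_sym.
rewrite card_in_imset; last first.
  move=> [k a] [k' a']; rewrite !inE /= => H1 H2 E.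
  have E1 := congr1 (fun f : hv N q => f k) E; have E2 := congr1 (fun f : hv N q => f k') E.
  rewrite /= !ffunE !eqxx in E1 E2.
  case: (eqVneq k' k) E1 E2 => [->|ne] E1 E2; first by rewrite E1.
  by rewrite E1 eqxx in H1.
rewrite -sum1_card.
rewrite (eq_bigl (fun p => predT p.1 && (p.2 != x p.1))); last by move=> p; rewrite inE.
rewrite -(pair_big_dep predT (fun i a => a != x i) (fun _ _ => 1)) /=.
rewrite (eq_bigr (fun _ => q - 1)); last first.
  move=> i _; rewrite sum1_card.
  have := cardC1 (x i); rewrite card_ord subn1 => <-.
  by apply: eq_card => a; rewrite !inE.
by rewrite sum_nat_const card_ord.
Qed.
End Ham.

Definition join n m q (x : hv n q) (y : hv m q) : hv (n+m) q :=
  [ffun k => match split k with inl i => x i | inr j => y j end].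

Lemma lpart_join n m q (x : hv n q) (y : hv m q) : lpart (join x y) = x.
Proof. by apply/ffunP => i; rewrite !ffunE (unsplitK (inl i)). Qed.
Lemma rpart_join n m q (x : hv n q) (y : hv m q) : rpart (join x y) = y.
Proof. by apply/ffunP => i; rewrite !ffunE (unsplitK (inr i)). Qed.
Lemma join_part n m q (z : hv (n+m) q) : join (lpart z) (rpart z) = z.
Proof. by apply/ffunP => k; rewrite !ffunE; case: splitP => j Hk; rewrite ffunE; congr (z _); apply: val_inj; rewrite /= Hk. Qed.

Lemma join_injl n m q (y : hv m q) : injective (fun x : hv n q => join x y).
Proof. by move=> x1 x2 E; rewrite -(lpart_join x1 y) E lpart_join. Qed.
Lemma join_injr n m q (x : hv n q) : injective (fun y : hv m q => join x y).
Proof. by move=> x1 x2 E; rewrite -(rpart_join x x1) E rpart_join. Qed.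

Lemma hamming_split n m q (z w : hv (n+m) q) :
  hamming z w = hamming (lpart z) (lpart w) + hamming (rpart z) (rpart w).
Proof.
rewrite /hamming -!sum1_card (big_split_ord _ (fun i => i \in [set i | z i != w i])) /=.
by congr (_ + _); apply: eq_bigl => i; rewrite !inE !ffunE.
Qed.

Lemma split_count n m q (z : hv (n+m) q) (P : pred (hv (n+m) q)) :
  #|[set z' | adj z z' & P z']| =
  #|[set x' | adj (lpart z) x' & P (join x' (rpart z))]| +
  #|[set y' | adj (rpart z) y' & P (join (lpart z) y')]|.
Proof.
set A := [set z' | adj z z' & P z'].
rewrite -(cardsID [set w | rpart w == rpart z] A).
congr (_ + _).
  rewrite -(card_imset _ (@join_injl n m q (rpart z))).
  apply: eq_card => w; apply/idP/imsetP.
    rewrite !inE => /andP[/andP[Ha HP] /eqP Hr]; exists (lpart w); last by rewrite -Hr join_part.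
    rewrite inE -Hr join_part HP andbT.
    move: Ha; rewrite /adj hamming_split Hr.
    by have := hamming0 (rpart z) (rpart z); rewrite eqxx => /eqP ->; rewrite addn0.
  move=> [x' Hx' ->]; rewrite inE in Hx'; case/andP: Hx' => Ha HP.
  rewrite !inE rpart_join eqxx HP andbT /adj hamming_split lpart_join rpart_join.
  by have := hamming0 (rpart z) (rpart z); rewrite eqxx => /eqP ->; rewrite addn0 andbT.
rewrite -(card_imset _ (@join_injr n m q (lpart z))).
apply: eq_card => w; apply/idP/imsetP.
  rewrite !inE => /andP[/negP Hr /andP[Ha HP]].
  have Hl : lpart w = lpart z.
    move: Ha; rewrite /adj hamming_split.
    have : hamming (rpart z) (rpart w) != 0 by rewrite hamming0 eq_sym; apply/negP.
    move=> H1 H2; apply/eqP; rewrite eq_sym -hamming0; lia.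
  exists (rpart w); last by rewrite -Hl join_part.
  rewrite inE -Hl join_part HP andbT.
  move: Ha; rewrite /adj hamming_split Hl.
  by have := hamming0 (lpart z) (lpart z); rewrite eqxx => /eqP ->.
move=> [y' Hy' ->]; rewrite inE in Hy'; case/andP: Hy' => Ha HP.
rewrite !inE rpart_join HP andbT /adj hamming_split lpart_join rpart_join.
have := hamming0 (lpart z) (lpart z); rewrite eqxx => /eqP ->; rewrite add0n; move: (Ha); rewrite /adj => -> ; rewrite andbT.
by apply: contraL Ha => /eqP ->; rewrite adj_irr.
Qed.

Lemma part_count (T : finType) (P : pred T) (f : T -> nat) (Q : pred nat) K :
  (forall x, 1 <= f x <= K) ->
  #|[set x | P x & Q (f x)]| = \sum_(1 <= j < K.+1 | Q j) #|[set x | P x & f x == j]|.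
Proof.
move=> Hf.
rewrite -sum1_card (eq_bigr (fun j => \sum_x (P x && (f x == j) : nat))); last first.
  by move=> j _; rewrite -sum1_card big_mkcond /=; apply: eq_bigr => x _; rewrite inE; case: (_ && _).
rewrite exchange_big /= big_mkcond /=; apply: eq_bigr => x _.
rewrite inE.
case HQ: (Q (f x)).
  have Hm : f x \in index_iota 1 K.+1 by rewrite mem_index_iota; have := Hf x; lia.
  rewrite big_mkcond (bigD1_seq (f x) Hm (iota_uniq _ _)) /= HQ eqxx andbT.
  rewrite big1 ?addn0; first by case: (P x).
  move=> j ne; by rewrite eq_sym (negbTE ne) andbF; case: (Q j).
rewrite andbF big1 // => j Hj; case: (eqVneq (f x) j) => [E|]; last by rewrite andbF.
by rewrite -E HQ in Hj.
Qed.

Lemma bc_of N q (h : hv N q -> nat) b c :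
  (forall z, (h z == 1) || (h z == 2)) -> (exists z, h z = 1) -> (exists z, h z = 2) ->
  (forall z, h z = 1 -> #|[set z' | adj z z' & h z' == 2]| = b) ->
  (forall z, h z = 2 -> #|[set z' | adj z z' & h z' == 1]| = c) -> bc_coloring h b c.
Proof.
move=> hz [z1 Hz1] [z2 Hz2] Hb Hc.
pose D := N * (q - 1).
have tot z : #|[set z' | adj z z' & h z' == 1]| + #|[set z' | adj z z' & h z' == 2]| = D.
  rewrite /D -(degree z) -(cardsID [set z' | h z' == 1] [set z' | adj z z']).
  congr (_ + _); apply: eq_card => w; rewrite !inE.
    by rewrite andbC.
  by case/orP: (hz w) => /eqP ->; rewrite /= ?andbF ?andbT.
exists (fun a a' => if a == 1 then (if a' == 1 then D - b else b) else (if a' == 1 then c else D - c)).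
split => //; split.
- by move=> x; case/orP: (hz x) => /eqP ->.
- by move=> j /andP[j1 j2]; case: j j1 j2 => [|[|[|]]] //= _ _; [exists z1 | exists z2].
move=> z j Hj.
have Ht := tot z.
case/orP: (hz z) => /eqP Ez; rewrite Ez /=.
  have Hb' := Hb z Ez.
  case: j Hj => [|[|[|]]] //= _; try by rewrite -Hb' -Ht addnK.
have Hc' := Hc z Ez.
case: j Hj => [|[|[|]]] //= _; try by rewrite -Hc' -Ht addKn.
Qed.
Lemma fiber_card (m q : nat) (k : 'I_m) (a : 'I_q) :
  #|[set w : {ffun 'I_m -> 'I_q} | w k == a]| = q ^ (m - 1).
Proof.
have E : [set w : {ffun 'I_m -> 'I_q} | w k == a] =i pfamily a [pred k' | k' != k] (fun _ => predT).
  move=> w; rewrite inE; apply/eqP/pfamilyP => [Hw|[Hs _]].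
    split => //; apply/subsetP => k'; rewrite !inE; apply: contra => /eqP ->; by rewrite Hw.
  apply/eqP; case: (eqVneq (w k) a) => // ne; have := subsetP Hs k; rewrite !inE ne eqxx; by move/(_ isT).
rewrite (eq_card E) card_pfamily.
have -> : [seq #|(predT : pred 'I_q)| | x in [pred k' | k' != k]] = nseq (m - 1) q.
  rewrite (eq_card (B := 'I_q)) // card_ord.
  have mc (s : seq (ordinal m)) : [seq q | _ <- s] = nseq (size s) q by elim: s => //= x s ->.
  rewrite /image_mem mc -cardE (eq_card (B := predC1 k)) // cardC1 card_ord subn1.
  by [].
elim: (m - 1) => //= n ->; by rewrite expnS.
Qed.

Definition win (q t i j : nat) : bool := [exists k : 'I_t, j == (i - 1 + k) %% q + 1].

Lemma sum_card (q : nat) (P : pred nat) :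
  \sum_(1 <= j < q.+1) (P j : nat) = #|[set j : 'I_q | P j.+1]|.
Proof.
rewrite big_add1 /= big_mkord -sum1_card [RHS]big_mkcond /=; apply: eq_bigr => j _.
by rewrite inE; case: (P j.+1).
Qed.

Lemma W1 q t i : 0 < q -> t <= q -> \sum_(1 <= j < q.+1) (win q t i j : nat) = t.
Proof.
move=> q0 tq; rewrite sum_card.
pose g (k : 'I_t) : 'I_q := Ordinal (ltn_pmod (i - 1 + k) q0).
have ginj : injective g.
  move=> k1 k2 /(congr1 val) /= /eqP; rewrite eqn_modDl !modn_small; last 2 first.
    - by apply: leq_trans (ltn_ord _) tq.
    - by apply: leq_trans (ltn_ord _) tq.
  by move/eqP=> E; apply: val_inj.
rewrite -[RHS](card_ord t) -cardsT -(card_imset _ ginj).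
apply: eq_card => j; rewrite inE; apply/existsP/imsetP => [[k Hk]|[k _ ->]].
  exists k => //; apply: val_inj => /=; move: Hk; rewrite addn1 eqSS => /eqP ->.
  by [].
by exists k; rewrite /= addn1.
Qed.

Lemma gA_prop q t j0 (k : 'I_t) : 0 < q -> t <= q -> 1 <= j0 <= q ->
  (j0 - 1 + (q - k)) %% q + k = j0 - 1 %[mod q].
Proof.
move=> q0 tq Hj; rewrite modnDml -addnA subnK; last by apply: ltnW; apply: leq_trans (ltn_ord k) tq.
by rewrite modnDr modn_small //; lia.
Qed.

Lemma WA q t j0 : 0 < q -> t <= q -> 1 <= j0 <= q ->
  \sum_(1 <= i < q.+1) (win q t i j0 : nat) = t.
Proof.
move=> q0 tq Hj; rewrite sum_card.
pose g (k : 'I_t) : 'I_q := Ordinal (ltn_pmod (j0 - 1 + (q - k)) q0).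
have ginj : injective g.
  move=> k1 k2 E.
  have E1 := gA_prop k1 q0 tq Hj; have E2 := gA_prop k2 q0 tq Hj.
  have : (g k1 + k1 == g k1 + k2 %[mod q]).
    by apply/eqP; rewrite {2}E /= E1 E2.
  rewrite eqn_modDl !modn_small; last 2 first.
    - by apply: leq_trans (ltn_ord _) tq.
    - by apply: leq_trans (ltn_ord _) tq.
  by move/eqP=> E'; apply: val_inj.
rewrite -[RHS](card_ord t) -cardsT -(card_imset _ ginj).
apply: eq_card => i; rewrite inE; apply/existsP/imsetP => [[k Hk]|[k _ ->]].
  exists k => //; apply: val_inj => /=; move: Hk; rewrite subn1 /= => /eqP Hk.
  have -> : j0 - 1 = (i + k) %% q by rewrite Hk addn1 subn1.
  rewrite modnDml -addnA subnKC; last by apply: ltnW; apply: leq_trans (ltn_ord k) tq.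
  by rewrite modnDr modn_small.
exists k; rewrite subn1 /= gA_prop // modn_small; lia.
Qed.

Section MDS.
Variables (m q : nat) (M : nat -> {set hv m q}).
Hypothesis hM : mds_partition M.

Definition cd (y : hv m q) : nat :=
  odflt 0 (omap (fun j : 'I_q => j.+1) [pick j : 'I_q | y \in M j.+1]).

Lemma cd_spec y : (1 <= cd y <= q) && (y \in M (cd y)).
Proof.
rewrite /cd; case: pickP => [j Hj | H] /=; first by rewrite Hj ltn_ord.
case: hM => _ _ /(_ y) [j Hj Hy].
have Hj' : j.-1 < q by lia.
by have := H (Ordinal Hj'); rewrite /= prednK ?Hy //; lia.
Qed.

Lemma cd_uniq y j : 1 <= j <= q -> y \in M j -> j = cd y.
Proof.
move=> Hj Hy; case/andP: (cd_spec y) => Hc Hyc.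
apply/eqP; apply: contraT => ne.
case: hM => _ Hd _.
by rewrite (disjointFr (Hd _ _ Hj Hc ne) Hy) in Hyc.
Qed.

Lemma hamming_le1 (x y : hv m q) k : (forall k', k' != k -> x k' = y k') -> hamming x y <= 1.
Proof.
move=> H; rewrite /hamming -(cards1 k); apply: subset_leq_card; apply/subsetP => k'.
rewrite !inE; apply: contraR => ne; by rewrite H.
Qed.

Lemma line_meet (C : {set hv m q}) (y : hv m q) (k : 'I_m) :
  mds2 C -> exists2 c, c \in C & forall k', k' != k -> c k' = y k'.
Proof.
case=> HC Hd.
pose pi (w : hv m q) := upd w k (y k).
have inj : {in C &, injective pi}.
  move=> c1 c2 H1 H2 E; apply/eqP; apply: contraT => ne.
  have := Hd _ _ H1 H2 ne.
  have : hamming c1 c2 <= 1.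
    apply: (hamming_le1 (k:=k)) => k' nk.
    have := congr1 (fun f : hv m q => f k') E; by rewrite /pi !ffunE (negbTE nk).
  lia.
have sub : pi @: C \subset [set w : hv m q | w k == y k].
  apply/subsetP => w /imsetP[c _ ->]; by rewrite inE ffunE eqxx.
have Eq : pi @: C = [set w : hv m q | w k == y k].
  apply/eqP; rewrite eqEcard sub /= card_in_imset // HC fiber_card //.
have : y \in pi @: C by rewrite Eq inE.
case/imsetP => c Hc Ey; exists c => // k' nk.
by rewrite Ey ffunE (negbTE nk).
Qed.

Lemma nbr_same y : #|[set y' | adj y y' & cd y' == cd y]| = 0.
Proof.
apply/eqP; rewrite cards_eq0; apply/eqP/setP => y'; rewrite !inE.
apply/negP => /andP[Ha /eqP Hc].
case/andP: (cd_spec y) => Hr Hy.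
case/andP: (cd_spec y') => _; rewrite Hc => Hy'.
case: hM => /(_ _ Hr) [_ Hd] _ _.
have ne : y != y' by apply: contraL Ha => /eqP ->; rewrite adj_irr.
have := Hd _ _ Hy Hy' ne; move: Ha; rewrite /adj => /eqP ->.
by [].
Qed.

Lemma nbr_code y j : 1 <= j <= q -> j != cd y -> #|[set y' | adj y y' & cd y' == j]| = m.
Proof.
move=> Hj ne.
case: hM => /(_ _ Hj) HC _ _.
have Hy : y \notin M j by apply: contra ne => /(cd_uniq Hj) ->.
pose phi (k : 'I_m) := odflt y [pick c in M j | [forall k', (k' != k) ==> (c k' == y k')]].
have phiS k : phi k \in M j /\ forall k', k' != k -> phi k k' = y k'.
  rewrite /phi; case: pickP => [c /andP[Hc /forallP Hf] | H] /=.
    by split => // k' nk; apply/eqP; have := Hf k'; rewrite nk.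
  case: (line_meet y k HC) => c Hc Hf.
  have := H c; rewrite Hc /=; move/negbT/negP; case; apply/forallP => k'.
  by apply/implyP => nk; rewrite Hf.
have phiD k : phi k k != y k.
  case: (phiS k) => Hp Hf; apply: contra Hy => /eqP E.
  have -> : y = phi k by apply/ffunP => k'; case: (eqVneq k' k) => [->|nk]; rewrite ?E ?Hf.
  by [].
have Eset : [set y' | adj y y' & cd y' == j] = [set phi k | k in 'I_m].
  apply/setP => y'; rewrite inE; apply/idP/imsetP.
    case/andP => Ha /eqP Hc.
    have Hy' : y' \in M j by case/andP: (cd_spec y') => _; rewrite Hc.
    case: (adjP Ha) => k [Hk Hag]; exists k => //.
    case: (phiS k) => Hp Hf.
    apply/eqP; apply: contraT => ne'.
    case: HC => _ Hd.
    have := Hd _ _ Hy' Hp ne'.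
    have : hamming y' (phi k) <= 1.
      by apply: (hamming_le1 (k:=k)) => k' nk; rewrite Hf // -Hag.
    lia.
  move=> [k _ ->]; case: (phiS k) => Hp Hf.
  rewrite (adj_agree (k:=k)) /=; last by rewrite eq_sym phiD.
    by apply/eqP/esym/cd_uniq.
  by move=> k' nk; rewrite Hf.
rewrite Eset card_imset ?card_ord //.
move=> k1 k2 E; apply/eqP; apply: contraT => nk.
case: (phiS k2) => _ Hf.
have := phiD k1; rewrite E Hf ?eqxx //; by rewrite eq_sym.
Qed.

End MDS.

Lemma sum_bool_compl q (P : pred nat) :
  \sum_(1 <= j < q.+1) (P j : nat) + \sum_(1 <= j < q.+1) (~~ P j : nat) = q.
Proof.
rewrite -big_split /= (eq_bigr (fun _ => 1)); last by move=> j _; case: (P j).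
by rewrite sum_nat_const_nat muln1 subn1.
Qed.

Lemma adj0 N q (x y : hv N q) : N = 0 -> adj x y = false.
Proof.
move=> N0.
rewrite /adj /hamming (_ : [set i | x i != y i] = set0) ?cards0 //.
by apply/setP => i; move: (ltn_ord i); rewrite [X in _ < X]N0.
Qed.

Section G.
Variables (m q : nat) (M : nat -> {set hv m q}).
Hypothesis q0 : 0 < q.
Hypothesis hMp : 1 <= m -> mds_partition M.

Lemma Gmap12 t i y : (Gmap M t i y == 1) || (Gmap M t i y == 2).
Proof. by rewrite /Gmap; repeat case: ifP. Qed.

Lemma GmapE (m0 : 0 < m) t i y : Gmap M t i y = if win q t i (cd M y) then 1 else 2.
Proof.
have hM := hMp m0.
rewrite /Gmap (_ : (m == 0) = false); last by lia.
congr (if _ then 1 else 2); apply/existsP/existsP => [[k Hk]|[k Hk]]; exists k.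
  have Hb : 1 <= ((i - 1 + k) %% q).+1 <= q by have := ltn_pmod (i - 1 + k) q0; lia.
  by rewrite addn1 (cd_uniq hM Hb Hk).
by rewrite -addn1 -(eqP Hk); case/andP: (cd_spec hM y).
Qed.

Lemma FactA t y : t <= q -> \sum_(1 <= j < q.+1) (Gmap M t j y == 1 : nat) = t.
Proof.
move=> tq.
case: (posnP m) => [m0|m0].
  rewrite (eq_big_nat _ _ (F2 := fun j => (j <= t : nat))); last first.
    by move=> j Hj; rewrite /Gmap (_ : (m == 0) = true) ?m0 //; case: ifP => /=; lia.
  rewrite sum_card.
  have wi : injective (widen_ord tq) by move=> a b /(congr1 val) /= E; apply: val_inj.
  rewrite -[RHS](card_ord t) -cardsT -(card_imset _ wi).
  apply: eq_card => j; rewrite inE; apply/idP/imsetP => [Hj|[k _ ->]] /=; last by [].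
  by exists (Ordinal Hj) => //; apply: val_inj.
have hM := hMp m0.
rewrite (eq_bigr (fun j => (win q t j (cd M y) : nat))); last first.
  by move=> j _; rewrite GmapE //; case: (win _ _ _ _).
by apply: WA => //; case/andP: (cd_spec hM y).
Qed.

Lemma FactA2 t y : t <= q -> \sum_(1 <= j < q.+1) (Gmap M t j y == 2 : nat) = q - t.
Proof.
move=> tq; have := sum_bool_compl q (fun j => Gmap M t j y == 1).
rewrite FactA // (eq_bigr (fun j => (Gmap M t j y == 2 : nat))); first by lia.
by move=> j _; case/orP: (Gmap12 t j y) => /eqP ->.
Qed.

Lemma FactB t i y c : t <= q -> (c == 1) || (c == 2) -> Gmap M t i y != c ->
  #|[set y' | adj y y' & Gmap M t i y' == c]| = m * (if c == 1 then t else q - t).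
Proof.
move=> tq Hc Hy.
case: (posnP m) => [m0|m0].
  rewrite [X in _ = X * _]m0 mul0n; apply/eqP; rewrite cards_eq0; apply/eqP/setP => y'.
  by rewrite !inE adj0.
have hM := hMp m0.
pose Q j := (if win q t i j then 1 else 2) == c.
rewrite (eq_card (B := [set y' | adj y y' & Q (cd M y')])); last first.
  by move=> y'; rewrite !inE GmapE.
rewrite (@part_count _ _ _ _ q); last by move=> x; case/andP: (cd_spec hM x).
rewrite big_mkcond /=.
rewrite (eq_big_nat _ _ (F2 := fun j => (Q j && (j != cd M y)) * m)); last first.
  move=> j Hj; case: (Q j) => //=.
  case: (eqVneq j (cd M y)) => [->|ne] /=; first by rewrite (nbr_same hM).
  by rewrite (nbr_code hM) ?mul1n //; lia.
rewrite -big_distrl /= mulnC; congr (_ * _).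
move: Hy; rewrite GmapE // => Hy.
case/orP: Hc => /eqP Ec; subst c; rewrite /=.
  have Hw : win q t i (cd M y) = false by move: Hy; case: (win _ _ _ _).
  rewrite -(W1 i q0 tq); apply: eq_big_nat => j _; rewrite /Q.
  case: (eqVneq j (cd M y)) => [->|ne]; first by rewrite Hw.
  by rewrite andbT; case: (win _ _ _ _).
have Hw : win q t i (cd M y) = true by move: Hy; case: (win _ _ _ _).
have := sum_bool_compl q (win q t i); rewrite W1 // => E.
rewrite (eq_big_nat _ _ (F2 := fun j => (~~ win q t i j : nat))); first by lia.
move=> j _; rewrite /Q.
case: (eqVneq j (cd M y)) => [->|ne]; first by rewrite Hw.
by rewrite andbT; case: (win _ _ _ _).
Qed.

End G.

Lemma inv_count n m q (f : hv n q -> nat) (g : nat -> hv m q -> nat) (z : hv (n+m) q) c :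
  #|[set z' | adj z z' & invasion f g z' == c]| =
  #|[set x' | adj (lpart z) x' & g (f x') (rpart z) == c]| +
  #|[set y' | adj (rpart z) y' & g (f (lpart z)) y' == c]|.
Proof.
rewrite (split_count z (fun z' => invasion f g z' == c)).
by congr (_ + _); apply: eq_card => w; rewrite !inE /invasion ?lpart_join ?rpart_join.
Qed.

Lemma xpart n q (f : hv n q -> nat) K S (x : hv n q) (P : pred nat) :
  perfect_coloring f K S ->
  #|[set x' | adj x x' & P (f x')]| = \sum_(1 <= j < K.+1 | P j) S (f x) j.
Proof.
case=> Hr _ Hc.
rewrite (@part_count _ (adj x) f P K) // !(big_mkcond P).
apply: eq_big_nat => j Hj; case: (P j) => //; by rewrite Hc.
Qed.

Lemma sumlast q (P : pred nat) (F : nat -> nat) :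
  \sum_(1 <= j < q.+2 | P j) F j = \sum_(1 <= j < q.+1) (P j * F j) + P q.+1 * F q.+1.
Proof.
rewrite big_mkcond big_nat_recr //=; congr (_ + _); last by case: (P _); rewrite ?mul1n.
by apply: eq_bigr => j _; case: (P j); rewrite ?mul1n.
Qed.

Lemma sum_const_on q (P : pred nat) (F : nat -> nat) a :
  (forall j, 1 <= j <= q -> P j -> F j = a) ->
  \sum_(1 <= j < q.+1) (P j * F j) = a * \sum_(1 <= j < q.+1) (P j : nat).
Proof.
move=> H; rewrite big_distrr /=; apply: eq_big_nat => j Hj.
case E: (P j); last by rewrite muln0.
by rewrite H ?E // mul1n muln1.
Qed.

Lemma sum_pos_ex q (P : pred nat) :
  0 < \sum_(1 <= j < q.+1) (P j : nat) -> exists j, 1 <= j <= q /\ P j.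
Proof.
rewrite sum_card card_gt0 => /set0Pn [j]; rewrite inE => Hj.
by exists j.+1; rewrite ltn_ord.
Qed.

Lemma cntE m q (M : nat -> {set hv m q}) t y c :
  0 < q -> (1 <= m -> mds_partition M) -> t <= q -> (c == 1) || (c == 2) ->
  \sum_(1 <= j < q.+1) (Gmap M t j y == c : nat) = if c == 1 then t else q - t.
Proof.
move=> q0 hM tq /orP[] /eqP ->; first by apply: FactA.
by apply: FactA2.
Qed.

Lemma part1 (q m : nat) (M : nat -> {set hv m q}) :
  2 <= q ->
  (1 <= m -> mds_partition M) ->
  (forall (n : nat) (f : hv n q -> nat) (S : nat -> nat -> nat)
          (alpha alpha' beta gamma delta : nat),
      perfect_coloring f q.+1 S ->
      (forall i j, 1 <= i <= q -> 1 <= j <= q -> i != j -> S i j = alpha) ->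
      (forall i, 1 <= i <= q -> S i i = alpha') ->
      (forall i, 1 <= i <= q -> S i q.+1 = beta) ->
      (forall j, 1 <= j <= q -> S q.+1 j = gamma) ->
      S q.+1 q.+1 = delta ->
      m + alpha = gamma ->
      forall t l, t <= q -> (l == 1) || (l == 2) ->
        t * (l - 1) + (q - t) * (2 - l) != 0 ->
        bc_coloring
          (invasion f (fun i => if i <= q then Gmap M t i else fun _ => l))
          (gamma * (q - t) + beta * (l - 1)) (gamma * t + beta * (2 - l))).
Proof.
move=> q2 hM n f S al al' be ga de Hpc Hij Hii Hiq Hqj Hqq Hmg t l tq Hl Hnz.
have q0 : 0 < q by lia.
have [Hr Hs Hc] := Hpc.
set g := fun i => if i <= q then Gmap M t i else fun _ => l.
have Hg z : invasion f g z = g (f (lpart z)) (rpart z) by [].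
have Hj x y : invasion f g (join x y) = g (f x) y by rewrite /invasion lpart_join rpart_join.
pose y0 : hv m q := [ffun _ => Ordinal q0].
have key z c : (c == 1) || (c == 2) -> invasion f g z != c ->
    #|[set z' | adj z z' & invasion f g z' == c]| =
    ga * (if c == 1 then t else q - t) + be * (l == c).
  move=> Hc0 hz.
  rewrite inv_count (@xpart n q f q.+1 S (lpart z) (fun j => g j (rpart z) == c) Hpc) sumlast.
  have Hfr := Hr (lpart z).
  set i := f (lpart z) in Hfr hz *; set y := rpart z in hz *.
  rewrite Hg -/i -/y in hz.
  have Hcnt := cntE y q0 hM tq Hc0.
  rewrite (eq_big_nat _ _ (F2 := fun j => (Gmap M t j y == c) * S i j)); last first.
    by move=> j Hjq; rewrite /g (_ : j <= q) //; lia.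
  rewrite /g /= ltnn.
  case: (leqP i q) => Hiq'.
    have {}hz : Gmap M t i y != c by move: hz; rewrite /g Hiq'.
    rewrite (sum_const_on (a := al)); last first.
      move=> j Hjq /eqP E; apply: Hij; rewrite ?Hjq //; first by lia.
      by apply: contraNneq hz => ->; rewrite E.
    rewrite Hcnt Hiq; last by lia.
    rewrite (FactB q0 hM tq Hc0 hz) -Hmg.
    case: (l == c); nia.
  have Ei : i = q.+1 by lia.
  have {}hz : l != c by move: hz; rewrite /g Ei ltnn.
  rewrite Ei.
  rewrite (sum_const_on (a := ga)); last by move=> j Hjq _; rewrite Hqj.
  rewrite Hcnt (negbTE hz) /= mul0n addn0 muln0 addn0.
  rewrite (_ : [set y' | adj y y' & false] = set0) ?cards0 ?addn0 //; by apply/setP => y'; rewrite !inE andbF.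
apply: bc_of.
- move=> z; rewrite Hg /g; case: ifP => _; first by apply: Gmap12.
  by [].
- case/orP: Hl => /eqP El.
    have [x Hx] := Hs q.+1 (leqnn _); exists (join x y0); by rewrite Hj Hx /g ltnn.
  have tp : 0 < \sum_(1 <= j < q.+1) (Gmap M t j y0 == 1 : nat) by rewrite FactA //; rewrite El in Hnz; lia.
  have [j [Hjr Hjg]] := sum_pos_ex tp.
  have [x Hx] := Hs j (ltac:(lia)); exists (join x y0); rewrite Hj Hx /g.
  by rewrite (_ : j <= q) //; [apply/eqP | lia].
- case/orP: Hl => /eqP El; last first.
    have [x Hx] := Hs q.+1 (leqnn _); exists (join x y0); by rewrite Hj Hx /g ltnn.
  have tp : 0 < \sum_(1 <= j < q.+1) (Gmap M t j y0 == 2 : nat) by rewrite FactA2 //; rewrite El in Hnz; lia.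
  have [j [Hjr Hjg]] := sum_pos_ex tp.
  have [x Hx] := Hs j (ltac:(lia)); exists (join x y0); rewrite Hj Hx /g.
  by rewrite (_ : j <= q) //; [apply/eqP | lia].
- move=> z Hz; rewrite key ?Hz //=.
  by case/orP: Hl => /eqP ->.
move=> z Hz; rewrite key ?Hz //=.
by case/orP: Hl => /eqP ->.
Qed.

Lemma sum_mk a b (P : pred nat) (F : nat -> nat) :
  \sum_(a <= j < b | P j) F j = \sum_(a <= j < b) (P j * F j).
Proof. by rewrite big_mkcond; apply: eq_bigr => j _; case: (P j); rewrite ?mul1n. Qed.

Lemma shift_sum q (P : pred nat) (F : nat -> nat) :
  \sum_(q.+1 <= j < (2 * q).+1 | P j) F j = \sum_(1 <= j < q.+1 | P (j + q)) F (j + q).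
Proof.
rewrite -{1}(add1n q) big_addn (_ : (2 * q).+1 - q = q.+1) //; lia.
Qed.

Lemma part2 (q m : nat) (M : nat -> {set hv m q}) :
  2 <= q ->
  (1 <= m -> mds_partition M) ->
  (forall (n : nat) (f : hv n q -> nat) (S : nat -> nat -> nat)
          (alpha beta gamma delta : nat),
      perfect_coloring f (2 * q) S ->
      (forall i j, 1 <= i <= q -> 1 <= j <= q -> S i j = alpha) ->
      (forall i j, 1 <= i <= q -> q < j <= 2 * q -> S i j = beta) ->
      (forall i j, q < i <= 2 * q -> 1 <= j <= q -> S i j = gamma) ->
      (forall i j, q < i <= 2 * q -> q < j <= 2 * q -> S i j = delta) ->
      m + alpha = gamma -> m + delta = beta ->
      forall t1 t2, t1 <= q -> t2 <= q ->
        t1 + t2 != 0 -> t1 + t2 != 2 * q ->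
        bc_coloring
          (invasion f (fun i => if i <= q then Gmap M t1 i
                                else Gmap M t2 (i - q)))
          (q * (gamma + beta) - gamma * t1 - beta * t2)
          (gamma * t1 + beta * t2)).
Proof.
move=> q2 hM n f S al be ga de Hpc Haa Hab Hba Hbb Hmg Hmd t1 t2 tq1 tq2 Hnz1 Hnz2.
have q0 : 0 < q by lia.
have [Hr Hs Hc] := Hpc.
set g := fun i => if i <= q then Gmap M t1 i else Gmap M t2 (i - q).
have Hg z : invasion f g z = g (f (lpart z)) (rpart z) by [].
have Hj x y : invasion f g (join x y) = g (f x) y by rewrite /invasion lpart_join rpart_join.
pose y0 : hv m q := [ffun _ => Ordinal q0].
have key z c : (c == 1) || (c == 2) -> invasion f g z != c ->
    #|[set z' | adj z z' & invasion f g z' == c]| =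
    ga * (if c == 1 then t1 else q - t1) + be * (if c == 1 then t2 else q - t2).
  move=> Hc0 hz.
  rewrite inv_count (@xpart n q f (2 * q) S (lpart z) (fun j => g j (rpart z) == c) Hpc).
  rewrite (@big_cat_nat _ _ _ q.+1) //=; last by lia.
  rewrite (shift_sum q (fun j => g j (rpart z) == c) (S (f (lpart z)))).
  rewrite [X in X + _ + _]sum_mk [X in _ + X + _]sum_mk.
  have Hfr := Hr (lpart z).
  set i := f (lpart z) in Hfr hz *; set y := rpart z in hz *.
  rewrite Hg -/i -/y in hz.
  have Hcnt1 := cntE y q0 hM tq1 Hc0.
  have Hcnt2 := cntE y q0 hM tq2 Hc0.
  rewrite (eq_big_nat _ _ (F2 := fun j => (Gmap M t1 j y == c) * S i j)); last first.
    by move=> j Hjq; rewrite /g (_ : j <= q) //; lia.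
  rewrite [X in _ + X + _](eq_big_nat _ _ (F2 := fun j => (Gmap M t2 j y == c) * S i (j + q))); last first.
    by move=> j Hjq; rewrite /g (_ : (j + q <= q) = false) ?addnK //; lia.
  case: (leqP i q) => Hiq'.
    have {}hz : Gmap M t1 i y != c by move: hz; rewrite /g Hiq'.
    rewrite (sum_const_on (a := al)); last by move=> j Hjq _; apply: Haa => //; lia.
    rewrite (sum_const_on (a := be)); last by move=> j Hjq _; apply: Hab; lia.
    rewrite Hcnt1 Hcnt2 /g Hiq' (FactB q0 hM tq1 Hc0 hz) -Hmg.
    by case: (c == 1); rewrite mulnDl; lia.
  have {}hz : Gmap M t2 (i - q) y != c by move: hz; rewrite /g leqNgt Hiq'.
  rewrite (sum_const_on (a := ga)); last by move=> j Hjq _; apply: Hba; lia.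
  rewrite (sum_const_on (a := de)); last by move=> j Hjq _; apply: Hbb; lia.
  rewrite Hcnt1 Hcnt2 /g leqNgt Hiq' /= (FactB q0 hM tq2 Hc0 hz) -Hmd.
  by case: (c == 1); rewrite mulnDl; lia.
apply: bc_of.
- move=> z; rewrite Hg /g; case: ifP => _; by apply: Gmap12.
- case: (posnP t1) => [t10|t1p].
    have tp : 0 < \sum_(1 <= j < q.+1) (Gmap M t2 j y0 == 1 : nat) by rewrite FactA //; lia.
    have [j [Hjr Hjg]] := sum_pos_ex tp.
    have [x Hx] := Hs (j + q) (ltac:(lia)); exists (join x y0); rewrite Hj Hx /g.
    by rewrite (_ : (j + q <= q) = false) ?addnK; [apply/eqP | lia].
  have tp : 0 < \sum_(1 <= j < q.+1) (Gmap M t1 j y0 == 1 : nat) by rewrite FactA //; lia.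
  have [j [Hjr Hjg]] := sum_pos_ex tp.
  have [x Hx] := Hs j (ltac:(lia)); exists (join x y0); rewrite Hj Hx /g.
  by rewrite (_ : j <= q) //; [apply/eqP | lia].
- case: (ltnP t1 q) => [t1p|t1q].
    have tp : 0 < \sum_(1 <= j < q.+1) (Gmap M t1 j y0 == 2 : nat) by rewrite FactA2 //; lia.
    have [j [Hjr Hjg]] := sum_pos_ex tp.
    have [x Hx] := Hs j (ltac:(lia)); exists (join x y0); rewrite Hj Hx /g.
    by rewrite (_ : j <= q) //; [apply/eqP | lia].
  have tp : 0 < \sum_(1 <= j < q.+1) (Gmap M t2 j y0 == 2 : nat) by rewrite FactA2 //; lia.
  have [j [Hjr Hjg]] := sum_pos_ex tp.
  have [x Hx] := Hs (j + q) (ltac:(lia)); exists (join x y0); rewrite Hj Hx /g.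
  by rewrite (_ : (j + q <= q) = false) ?addnK; [apply/eqP | lia].
- move=> z Hz; rewrite key ?Hz //=.
  have h1 : ga * t1 <= ga * q by rewrite leq_mul2l tq1 orbT.
  have h2 : be * t2 <= be * q by rewrite leq_mul2l tq2 orbT.
  rewrite !mulnBr mulnDr [q * ga]mulnC [q * be]mulnC; lia.
move=> z Hz; rewrite key ?Hz //=.
Qed.

Theorem proposition9 (q m : nat) (M : nat -> {set hv m q}) :
  2 <= q ->
  (1 <= m -> mds_partition M) ->
  (* part (1) *)
  (forall (n : nat) (f : hv n q -> nat) (S : nat -> nat -> nat)
          (alpha alpha' beta gamma delta : nat),
      perfect_coloring f q.+1 S ->
      (forall i j, 1 <= i <= q -> 1 <= j <= q -> i != j -> S i j = alpha) ->
      (forall i, 1 <= i <= q -> S i i = alpha') ->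
      (forall i, 1 <= i <= q -> S i q.+1 = beta) ->
      (forall j, 1 <= j <= q -> S q.+1 j = gamma) ->
      S q.+1 q.+1 = delta ->
      m + alpha = gamma ->
      forall t l, t <= q -> (l == 1) || (l == 2) ->
        t * (l - 1) + (q - t) * (2 - l) != 0 ->
        bc_coloring
          (invasion f (fun i => if i <= q then Gmap M t i else fun _ => l))
          (gamma * (q - t) + beta * (l - 1)) (gamma * t + beta * (2 - l)))
  /\
  (* part (2) *)
  (forall (n : nat) (f : hv n q -> nat) (S : nat -> nat -> nat)
          (alpha beta gamma delta : nat),
      perfect_coloring f (2 * q) S ->
      (forall i j, 1 <= i <= q -> 1 <= j <= q -> S i j = alpha) ->
      (forall i j, 1 <= i <= q -> q < j <= 2 * q -> S i j = beta) ->
      (forall i j, q < i <= 2 * q -> 1 <= j <= q -> S i j = gamma) ->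
      (forall i j, q < i <= 2 * q -> q < j <= 2 * q -> S i j = delta) ->
      m + alpha = gamma -> m + delta = beta ->
      forall t1 t2, t1 <= q -> t2 <= q ->
        t1 + t2 != 0 -> t1 + t2 != 2 * q ->
        bc_coloring
          (invasion f (fun i => if i <= q then Gmap M t1 i
                                else Gmap M t2 (i - q)))
          (q * (gamma + beta) - gamma * t1 - beta * t2)
          (gamma * t1 + beta * t2)).
Proof.
move=> q2 hM; split; [exact: part1 | exact: part2].
Qed.
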